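(* Let $\mathcal A$ be a finite action set and let $\{\mathcal P^{(a)}\}_{a\in\mathcal A}$ be $O$-outcome instruments on $\mathbb M_S$ for which there exist linear maps $R^{(a)}:\mathbb M_O\to\mathbb M_S\otimes\mathbb M_O$ with $R^{(a)}\circ\operatorname{Tr}_S\circ\mathcal P^{(a)}=\mathcal P^{(a)}$ and $\|R^{(a)}\|_{1\to1,\mathrm{diag}}\le\kappa_{\mathrm{uc}}$ for all $a$. Let $\mathbb E'_1,\dots,\mathbb E'_{L-1}$ be arbitrary CPTP maps on $\mathbb M_S$ and define $\tilde{\mathbf A}_t(o,a,a'):=\operatorname{Tr}_S\circ\mathcal P^{(a')}\circ(\mathbb E'_t\otimes\mathcal T_o)\circ R^{(a)}$. Fix $l\in\{0,1,\dots,L-2\}$, a prefix $\tau_l\in(\mathcal A\times[O])^l$, an action $a_{l+1}\in\mathcal A$, and for each history $\tau_{l'}$ extending $(\tau_l,a_{l+1})$ a probability distribution $\pi(\cdot\mid\tau_{l'})$ on $\mathcal A$. Write $\tilde{\mathbf A}_{L-1:l+1}:=\tilde{\mathbf A}_{L-1}(o_{L-1},a_{L-1},a_L)\cdots\tilde{\mathbf A}_{l+1}(o_{l+1},a_{l+1},a_{l+2})$. Then for every diagonal $X\in\mathbb M_O$, $$\sum_{o_{l+1},a_{l+2},o_{l+2},\dots,a_{L-1},o_{L-1},a_L}\big\|\tilde{\mathbf A}_{L-1:l+1}X\big\|_1\prod_{l'=l+1}^{L-1}\pi(a_{l'+1}\mid\tau_{l'})\le S^2\kappa_{\mathrm{uc}}\|X\|_1,$$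 where $\tau_{l'}=(\tau_l,a_{l+1},o_{l+1},\dots,a_{l'},o_{l'})$ and the sum ranges over $o_j\in[O]$, $a_j\in\mathcal A$.
   Context: $\mathbb M_d$: complex $d\times d$ matrices; $\{|o\rangle\}$ the computational basis of $\mathbb C^O$; $\|\cdot\|_1$ the trace norm. An $O$-outcome instrument is $\mathcal P(X)=\sum_{o\in[O]}\Phi_o(X)\otimes|o\rangle\langle o|$ with $\Phi_o$ completely positive and $\sum_o\Phi_o$ trace preserving. $\mathcal T_o(Y)=\langle o|Y|o\rangle$ for $Y\in\mathbb M_O$, and $(\mathbb E\otimes\mathcal T_o)$ denotes $\mathbb E\circ(\mathrm{id}_S\otimes\mathcal T_o):\mathbb M_S\otimes\mathbb M_O\to\mathbb M_S$. $\operatorname{Tr}_S$ is the partial trace over $\mathbb C^S$. For a linear map $R:\mathbb M_O\to\mathbb M_S\otimes\mathbb M_O$, $\|R\|_{1\to1,\mathrm{diag}}:=\sup\{\|R(X)\|_1: X\text{ diagonal},\|X\|_1=1\}$. *)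

(* Defs.v *)
(* Complex matrices are modelled over an arbitrary
   numClosedFieldType C (e.g. C = R[i] for R : realType is the field of
   complex numbers). *)
From HB Require Import structures.
From mathcomp Require Import all_boot all_order all_algebra.
From mathcomp Require Import sesquilinear spectral.
From mathcomp.real_closed Require mxtens.

Set Implicit Arguments.
Unset Strict Implicit.
Unset Printing Implicit Defensive.

Import Order.TTheory GRing.Theory Num.Theory.
Local Open Scope ring_scope.

Section QDefs.
Variable C : numClosedFieldType.

Definition adjmx m n (X : 'M[C]_(m, n)) : 'M[C]_(n, m) := map_mx Num.conj X^T.

(* index of |i> (x) |j> in C^m (x) C^n  (Kronecker convention) *)
Definition tidx m n (i : 'I_m) (j : 'I_n) : 'I_(m * n) := mxtens.mxtens_index (i, j).

Definition tens m n p q (A : 'M[C]_(m, n)) (B : 'M[C]_(p, q)) : 'M[C]_(m * p, n * q) :=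
  mxtens.tensmx A B.

Definition psd n (A : 'M[C]_n) : Prop :=
  adjmx A = A /\ forall v : 'rV[C]_n, 0 <= (v *m A *m adjmx v) 0 0.

(* trace norm = sum of singular values = sum of square roots of the
   eigenvalues (with multiplicity) of X^* X *)
Definition trnorm n (X : 'M[C]_n) : C :=
  \sum_(i < n) sqrtC (spectral_diag (adjmx X *m X) 0 i).

(* block (i,j) in M_k (x) M_n, as an element of M_n *)
Definition blk k n (Y : 'M[C]_(k * n)) (i j : 'I_k) : 'M[C]_n :=
  \matrix_(s, s') Y (tidx i s) (tidx j s').

(* id_k (x) Phi *)
Definition ampl k n p (Phi : 'M[C]_n -> 'M[C]_p) (Y : 'M[C]_(k * n)) : 'M[C]_(k * p) :=
  \matrix_(x, y) Phi (blk Y (mxtens.mxtens_unindex x).1 (mxtens.mxtens_unindex y).1)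
                      (mxtens.mxtens_unindex x).2 (mxtens.mxtens_unindex y).2.

Definition completely_positive n p (Phi : 'M[C]_n -> 'M[C]_p) : Prop :=
  forall k (Y : 'M[C]_(k * n)), psd Y -> psd (ampl Phi Y).

Definition trace_preserving n p (Phi : 'M[C]_n -> 'M[C]_p) : Prop :=
  forall X, \tr (Phi X) = \tr X.

Definition cptp n (Phi : {linear 'M[C]_n -> 'M[C]_n}) : Prop :=
  completely_positive Phi /\ trace_preserving Phi.

(* an O-outcome instrument is given by its CP components Phi_o, o in [O] *)
Definition is_instrument S O (Phi : 'I_O -> {linear 'M[C]_S -> 'M[C]_S}) : Prop :=
  (forall o, completely_positive (Phi o)) /\
  trace_preserving (fun X => \sum_o Phi o X).

Definition instr S O (Phi : 'I_O -> {linear 'M[C]_S -> 'M[C]_S}) (X : 'M[C]_S)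
  : 'M[C]_(S * O) := \sum_o tens (Phi o X) (delta_mx o o).

Definition ptrS S O (Y : 'M[C]_(S * O)) : 'M[C]_O :=
  \matrix_(o, o') \sum_(s < S) Y (tidx s o) (tidx s o').

(* T_o applied to the second factor: <o| Y |o> in M_S *)
Definition blockO S O (o : 'I_O) (Y : 'M[C]_(S * O)) : 'M[C]_S :=
  \matrix_(s, s') Y (tidx s o) (tidx s' o).

Definition is_diag n (X : 'M[C]_n) : Prop := is_diag_mx X.

Definition diag_norm_le S O (R : 'M[C]_O -> 'M[C]_(S * O)) (kappa : C) : Prop :=
  forall X : 'M[C]_O, is_diag X -> trnorm (R X) <= kappa * trnorm X.

Definition is_distribution (T : finType) (p : T -> C) : Prop :=
  (forall x, 0 <= p x) /\ \sum_x p x = 1.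

Section Atilde.
Variables (S O : nat) (A : finType).
Variables (Phi : A -> 'I_O -> {linear 'M[C]_S -> 'M[C]_S})
          (R : A -> {linear 'M[C]_O -> 'M[C]_(S * O)})
          (E : nat -> {linear 'M[C]_S -> 'M[C]_S}).

Definition Atilde (t : nat) (o : 'I_O) (a a' : A) (Y : 'M[C]_O) : 'M[C]_O :=
  ptrS (instr (Phi a') (E t (blockO o (R a Y)))).

(* apply successively the steps ((a_t, o_t), a_{t+1}), t = t0, t0+1, ... *)
Fixpoint applyA (t : nat) (st : seq ((A * 'I_O) * A)) (Y : 'M[C]_O) : 'M[C]_O :=
  if st is ((a, o), a') :: st' then applyA t.+1 st' (Atilde t o a a' Y) else Y.

(* For w = ((o_{l+1}, a_{l+2}), ..., (o_{L-1}, a_L)) : *)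
Definition acts (a1 : A) (w : seq ('I_O * A)) : seq A := a1 :: map snd w.
Definition hist_pairs (a1 : A) (w : seq ('I_O * A)) : seq (A * 'I_O) :=
  zip (acts a1 w) (map fst w).   (* (a_{l+1},o_{l+1}), ..., (a_{L-1},o_{L-1}) *)
Definition steps (a1 : A) (w : seq ('I_O * A)) : seq ((A * 'I_O) * A) :=
  zip (hist_pairs a1 w) (map snd w).

Definition lhs_sum (L l : nat) (tau : seq (A * 'I_O)) (a1 : A)
  (pi : seq (A * 'I_O) -> A -> C) (X : 'M[C]_O) : C :=
  \sum_(w : (L - 1 - l).-tuple ('I_O * A))
     trnorm (applyA l.+1 (steps a1 w) X) *
     \prod_(j < L - 1 - l) pi (tau ++ take j.+1 (hist_pairs a1 w)) (tnth w j).2.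

End Atilde.
End QDefs.

(* Main.v *)
Require Import Defs.
From HB Require Import structures.
From mathcomp Require Import all_boot all_order all_algebra.
From mathcomp Require Import sesquilinear spectral.
From mathcomp Require Import ring zify.
From mathcomp.real_closed Require mxtens.
Import Order.TTheory GRing.Theory Num.Theory.
Local Open Scope ring_scope.

Set Implicit Arguments.
Unset Strict Implicit.
Unset Printing Implicit Defensive.

Section Aux.
Variable C : numClosedFieldType.

Lemma tidxK m n (i : 'I_m) (j : 'I_n) : mxtens.mxtens_unindex (tidx i j) = (i, j).
Proof. exact: mxtens.mxtens_indexK. Qed.

Lemma sum_tidx m n (F : 'I_(m * n) -> C) :
  \sum_k F k = \sum_(i < m) \sum_(j < n) F (tidx i j).
Proof.
rewrite pair_big /=.
rewrite (reindex (@mxtens.mxtens_index m n)) /=; last first.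
  by exists (@mxtens.mxtens_unindex m n) => x _;
    [exact: mxtens.mxtens_indexK | exact: mxtens.mxtens_unindexK].
by apply: eq_bigr => -[i j].
Qed.

Lemma instrE S O (Phi : 'I_O -> {linear 'M[C]_S -> 'M[C]_S}) X s s' o o' :
  instr Phi X (tidx s o) (tidx s' o') = if o == o' then Phi o X s s' else 0.
Proof.
rewrite /instr summxE (bigD1 o) //= big1 => [|k nko].
  rewrite /tens /tidx mxtens.tensmxE !mxE eqxx /= addr0 eq_sym.
  by case: eqP => _; rewrite ?mulr1 ?mulr0.
by rewrite /tens /tidx mxtens.tensmxE !mxE eq_sym (negPf nko) mulr0.
Qed.

Lemma blockO_instr S O (Phi : 'I_O -> {linear 'M[C]_S -> 'M[C]_S}) X o :
  blockO o (instr Phi X) = Phi o X.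
Proof. by apply/matrixP => s s'; rewrite mxE instrE eqxx. Qed.

Lemma ptrS_instr S O (Phi : 'I_O -> {linear 'M[C]_S -> 'M[C]_S}) X :
  ptrS (instr Phi X) = diag_mx (\row_o \tr (Phi o X)).
Proof.
apply/matrixP => o o'; rewrite !mxE.
under eq_bigr do rewrite instrE.
have [E|ne] := eqVneq o o'; last by rewrite big1 => [|i _]; rewrite ?(negPf ne) ?mulr0n.
subst o'.
by [].
Qed.


Lemma blk_ampl k n p (F : 'M[C]_n -> 'M[C]_p) (Y : 'M[C]_(k * n)) i j :
  blk (ampl F Y) i j = F (blk Y i j).
Proof. by apply/matrixP => s s'; rewrite !mxE !tidxK. Qed.

Lemma ampl_comp k n p q (F : 'M[C]_p -> 'M[C]_q) (G : 'M[C]_n -> 'M[C]_p)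
  (Y : 'M[C]_(k * n)) : ampl (fun X => F (G X)) Y = ampl F (ampl G Y).
Proof. by apply/matrixP => x y; rewrite [RHS]mxE blk_ampl mxE. Qed.

Lemma ampl_id k n (Y : 'M[C]_(k * n)) : ampl (fun X => X) Y = Y.
Proof.
apply/matrixP => x y; rewrite !mxE /tidx.
by rewrite -!surjective_pairing !mxtens.mxtens_unindexK.
Qed.

Lemma CP_comp n p q (F : 'M[C]_p -> 'M[C]_q) (G : 'M[C]_n -> 'M[C]_p) :
  completely_positive F -> completely_positive G ->
  completely_positive (fun X => F (G X)).
Proof. by move=> HF HG k Y HY; rewrite ampl_comp; apply/HF/HG. Qed.

Lemma CP_id n : completely_positive (fun X : 'M[C]_n => X).
Proof. by move=> k Y HY; rewrite ampl_id. Qed.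

End Aux.

Section Chain.
Variable C : numClosedFieldType.
Variables (S O : nat) (A : finType).
Variables (Phi : A -> 'I_O -> {linear 'M[C]_S -> 'M[C]_S})
          (R : A -> {linear 'M[C]_O -> 'M[C]_(S * O)})
          (E : nat -> {linear 'M[C]_S -> 'M[C]_S})
          (pi : seq (A * 'I_O) -> A -> C).

Fixpoint fin t a (ws : seq ('I_O * A)) (W : 'M[C]_S) : 'M[C]_S :=
  if ws is (o, a') :: ws' then fin t.+1 a' ws' (E t (Phi a o W)) else W.
Definition lastA a (ws : seq ('I_O * A)) := last a (map snd ws).

Lemma stepsS (a : A) (o : 'I_O) (a' : A) ws : steps a ((o, a') :: ws) = ((a, o), a') :: steps a' ws.
Proof. by []. Qed.

Lemma hist_pairsS (a : A) (o : 'I_O) (a' : A) ws : hist_pairs a ((o, a') :: ws) = (a, o) :: hist_pairs a' ws.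
Proof. by []. Qed.

Lemma applyA_fin (HR : forall a X, R a (ptrS (instr (Phi a) X)) = instr (Phi a) X)
  ws t a W : applyA Phi R E t (steps a ws) (ptrS (instr (Phi a) W)) =
  ptrS (instr (Phi (lastA a ws)) (fin t a ws W)).
Proof.
elim: ws t a W => [|[o a'] ws IH] t a W //=.
rewrite /Atilde HR blockO_instr; exact: IH.
Qed.

Fixpoint Ex n h a (F : seq ('I_O * A) -> C) : C :=
  if n is n'.+1 then
    \sum_(o : 'I_O) \sum_(a' : A) pi (h ++ [:: (a, o)]) a' *
       Ex n' (h ++ [:: (a, o)]) a' (fun ws => F ((o, a') :: ws))
  else F [::].

Lemma sum_tupleS (T : finType) n (G : n.+1.-tuple T -> C) :
  \sum_w G w = \sum_x \sum_(w : n.-tuple T) G [tuple of x :: w].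
Proof.
rewrite pair_big /=.
rewrite (reindex (fun p : T * n.-tuple T => [tuple of p.1 :: p.2])) /=; last first.
  exists (fun w : n.+1.-tuple T => (thead w, [tuple of behead w])).
    by move=> [x w] _ /=; congr pair; apply: val_inj.
  by move=> w _; rewrite [RHS]tuple_eta.
by apply: eq_bigr => -[x w].
Qed.

Lemma lhs_Ex n h a (F : seq ('I_O * A) -> C) :
  \sum_(w : n.-tuple ('I_O * A)) F w *
     \prod_(j < n) pi (h ++ take j.+1 (hist_pairs a w)) (tnth w j).2 = Ex n h a F.
Proof.
elim: n h a F => [|n IH] h a F /=.
  under eq_bigr do rewrite big_ord0 mulr1.
  rewrite (bigD1 [tuple]) //= big1 ?addr0 // => t /eqP[].
  exact: tuple0.
rewrite sum_tupleS.
rewrite [RHS]pair_big /=; apply: eq_bigr => -[o a'] _.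
rewrite -IH mulr_sumr; apply: eq_bigr => w _.
rewrite big_ord_recl /= take0 mulrCA; congr (_ * (_ * _)).
apply: eq_bigr => j _; rewrite tnthS -catA /=.
by [].
Qed.

Lemma Ex_ext n h a F G : (forall ws, F ws = G ws) -> Ex n h a F = Ex n h a G.
Proof.
elim: n h a F G => [|n IH] h a F G FG /=; first exact: FG.
apply: eq_bigr => o _; apply: eq_bigr => a' _; congr (_ * _).
by apply: IH => ws.
Qed.

Lemma Ex_sum n h a (I : finType) (G : I -> seq ('I_O * A) -> C) :
  Ex n h a (fun ws => \sum_i G i ws) = \sum_i Ex n h a (G i).
Proof.
elim: n h a G => [|n IH] h a G //=.
under eq_bigr do under eq_bigr do
  rewrite (IH _ _ (fun i ws => G i (_ :: ws))) mulr_sumr.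
under eq_bigr do rewrite exchange_big.
by rewrite exchange_big.
Qed.

Lemma Ex_scale n h a c F : Ex n h a (fun ws => c * F ws) = c * Ex n h a F.
Proof.
elim: n h a F => [|n IH] h a F //=.
rewrite mulr_sumr; apply: eq_bigr => o _; rewrite mulr_sumr; apply: eq_bigr => a' _.
by rewrite (IH _ _ (fun ws => F (_ :: ws))) mulrCA.
Qed.

Lemma Ex_add n h a F G : Ex n h a (fun ws => F ws + G ws) = Ex n h a F + Ex n h a G.
Proof.
elim: n h a F G => [|n IH] h a F G //=.
rewrite -big_split; apply: eq_bigr => o _; rewrite -big_split; apply: eq_bigr => a' _.
by rewrite (IH _ _ (fun ws => F (_ :: ws)) (fun ws => G (_ :: ws))) mulrDr.
Qed.

Definition Dist h := forall x rest, is_distribution (pi (h ++ x :: rest)).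

Lemma Dist_cat h y : Dist h -> Dist (h ++ [:: y]).
Proof. by move=> D x rest; rewrite -catA; apply: D. Qed.

Lemma Ex_le n h a F G : Dist h -> (forall ws, size ws = n -> F ws <= G ws) ->
  Ex n h a F <= Ex n h a G.
Proof.
elim: n h a F G => [|n IH] h a F G D FG /=; first exact: FG.
apply: ler_sum => o _; apply: ler_sum => a' _.
apply: ler_wpM2l; first exact: (D (a, o) [::]).1.
apply: IH; first exact: Dist_cat.
by move=> ws sz; apply: FG; rewrite /= sz.
Qed.


Lemma tr_instr a W : is_instrument (Phi a) -> \sum_o \tr (Phi a o W) = \tr W.
Proof. by move=> [_ TP]; rewrite -TP raddf_sum. Qed.

Lemma Ex_TP (L : nat) n h a t W :
  (forall a, is_instrument (Phi a)) -> (forall t, (0 < t < L)%N -> cptp (E t)) ->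
  Dist h -> (0 < t)%N -> (t + n <= L)%N ->
  Ex n h a (fun ws => \sum_oL \tr (Phi (lastA a ws) oL (fin t a ws W))) = \tr W.
Proof.
move=> HI HE.
elim: n h a t W => [|n IH] h a t W D t0 tL /=; first exact: tr_instr.
have tL' : (t.+1 + n <= L)%N by rewrite addSnnS.
have Et : cptp (E t) by apply: HE; rewrite t0 /=; move: tL; rewrite addnS; lia.
rewrite -[RHS](tr_instr W (HI a)); apply: eq_bigr => o _.
under eq_bigr => a' _ do rewrite (IH _ _ t.+1 (E t (Phi a o W)) (Dist_cat _ D) (ltn0Sn _) tL').
by rewrite -mulr_suml (D (a, o) [::]).2 mul1r Et.2.
Qed.


Lemma finD t a ws : {morph fin t a ws : x y / x + y}.
Proof.
elim: ws t a => [|[o a'] ws IH] t a x y //=.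
by rewrite !linearD /= IH.
Qed.

Lemma finZ t a ws c x : fin t a ws (c *: x) = c *: fin t a ws x.
Proof.
elim: ws t a x => [|[o a'] ws IH] t a x //=.
by rewrite !linearZ /= IH.
Qed.

Lemma fin0 t a ws : fin t a ws 0 = 0.
Proof. by have := finZ t a ws 0 0; rewrite !scale0r. Qed.

Lemma fin_sum t a ws (I : finType) (F : I -> 'M[C]_S) :
  fin t a ws (\sum_i F i) = \sum_i fin t a ws (F i).
Proof. exact: (big_morph _ (finD t a ws) (fin0 t a ws)). Qed.

Lemma fin_CP (L : nat) ws t a :
  (forall a, is_instrument (Phi a)) -> (forall t, (0 < t < L)%N -> cptp (E t)) ->
  (0 < t)%N -> (t + size ws <= L)%N -> completely_positive (fin t a ws).
Proof.
move=> HI HE; elim: ws t a => [|[o a'] ws IH] t a t0 tL /=; first exact: CP_id.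
apply: (@CP_comp _ _ _ _ (fun X => fin t.+1 a' ws X) (fun X => E t (Phi a o X))).
  by apply: IH => //; rewrite addSnnS.
apply: CP_comp; last exact: (HI a).1.
suff /HE[] : (0 < t < L)%N by [].
by apply/andP; split => //; move: tL => /=; lia.
Qed.

End Chain.

Section CPineq.
Variable C : numClosedFieldType.

Lemma conjCM (x y : C) : (x * y)^* = x^* * y^*. Proof. exact: rmorphM. Qed.
Lemma conjCD (x y : C) : (x + y)^* = x^* + y^*. Proof. exact: rmorphD. Qed.
Lemma conjCN (x : C) : (- x)^* = - x^*. Proof. exact: rmorphN. Qed.
Lemma conjCsum (I : finType) (F : I -> C) : (\sum_i F i)^* = \sum_i (F i)^*.
Proof. exact: rmorph_sum. Qed.

Lemma adjmxE m n (X : 'M[C]_(m, n)) i j : adjmx X i j = (X j i)^*.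
Proof. by rewrite !mxE. Qed.

Lemma form_delta N (M : 'M[C]_N) p q :
  ((delta_mx 0 p : 'rV[C]_N) *m M *m adjmx (delta_mx 0 q : 'rV[C]_N)) 0 0 = M p q.
Proof.
have -> : adjmx (delta_mx 0 q : 'rV[C]_N) = delta_mx q 0.
  by apply/matrixP => x y; rewrite !mxE conjC_nat andbC.
by rewrite -rowE -colE !mxE.
Qed.

Lemma psd_quad N (M : 'M[C]_N) p q (al be : C) : psd M ->
  0 <= al * al^* * M p p + al * be^* * M p q + be * al^* * M q p + be * be^* * M q q.
Proof.
move=> [_ HM]; have := HM (al *: (delta_mx 0 p : 'rV[C]_N) + be *: delta_mx 0 q).
have -> : adjmx (al *: delta_mx 0 p + be *: delta_mx 0 q : 'rV[C]_N) =
   al^* *: adjmx (delta_mx 0 p) + be^* *: adjmx (delta_mx 0 q).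
  by apply/matrixP => x y; rewrite !mxE rmorphD !rmorphM.
have fd x y : \sum_j ((delta_mx 0 x : 'rV[C]_N) *m M) 0 j * adjmx (delta_mx 0 y : 'rV[C]_N) j 0 = M x y.
  by rewrite -form_delta [in RHS]mxE.
rewrite !(mulmxDl, mulmxDr) -!scalemxAl -!scalemxAr !mxE !fd.
by congr (0 <= _); ring.
Qed.


Lemma quad_ineq (a b d : C) :
  (forall al be : C, 0 <= al * al^* * a + al * be^* * b + be * al^* * b^* + be * be^* * d) ->
  [/\ 0 <= a, 0 <= d & `|b| *+ 2 <= a + d].
Proof.
move=> H.
have a0 : 0 <= a by have := H 1 0; rewrite !(rmorph0, rmorph1, mul0r, mulr0, mul1r, addr0).
have d0 : 0 <= d by have := H 0 1; rewrite !(rmorph0, rmorph1, mul0r, mulr0, mul1r, add0r).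
split => //.
have [->|b0] := eqVneq b 0; first by rewrite normr0 mul0rn addr_ge0.
set n := `|b|.
have n0 : n != 0 by rewrite normr_eq0.
have nr : n^* = n by rewrite conj_Creal // normr_real.
have bb : b^* = n ^+ 2 / b by rewrite /n normCK [b * _]mulrC mulfK.
have conjN x : (- x)^* = - x^* by apply: rmorphN.
have conjM x y : (x * y)^* = x^* * y^* by apply: rmorphM.
have conjV x : (x^-1)^* = (x^*)^-1 by apply: fmorphV.
have := H 1 (- (b / n)).
rewrite conjN conjM conjV conjC1 nr bb.
have -> : 1 * 1 * a + 1 * - (n ^+ 2 / b / n) * b + - (b / n) * 1 * (n ^+ 2 / b) +
   - (b / n) * - (n ^+ 2 / b / n) * d = a + d - n *+ 2.
  by field; apply/andP; split.
by rewrite subr_ge0.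
Qed.

Lemma psd_trace n (M : 'M[C]_(2 * n)) : psd M ->
  let c x y := \sum_(s < n) M (tidx x s) (tidx y s) in
  [/\ 0 <= c ord0 ord0, 0 <= c ord_max ord_max &
      `|c ord0 ord_max| *+ 2 <= c ord0 ord0 + c ord_max ord_max].
Proof.
move=> HM c; apply: quad_ineq => al be.
have herm s : M (tidx ord_max s) (tidx ord0 s) = (M (tidx ord0 s) (tidx ord_max s))^*.
  by have /matrixP/(_ (tidx ord_max s) (tidx ord0 s)) := HM.1; rewrite adjmxE => ->.
rewrite /c rmorph_sum !mulr_sumr -!big_split /=; apply: sumr_ge0 => s _.
by rewrite -herm; apply: psd_quad.
Qed.


Lemma CP_trace_ineq S (Psi : 'M[C]_S -> 'M[C]_S) (i j : 'I_S) :
  completely_positive Psi ->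
  [/\ 0 <= \tr (Psi (delta_mx i i)), 0 <= \tr (Psi (delta_mx j j)) &
     `|\tr (Psi (delta_mx i j))| *+ 2 <= \tr (Psi (delta_mx i i)) + \tr (Psi (delta_mx j j))].
Proof.
move=> HP.
pose sig (x : 'I_2) := if x == ord0 then i else j.
pose v : 'rV[C]_(2 * S) :=
  \row_p (((mxtens.mxtens_unindex p).2 == sig (mxtens.mxtens_unindex p).1)%:R).
pose G := adjmx v *m v.
have vE x s : v 0 (tidx x s) = (s == sig x)%:R by rewrite mxE tidxK.
have GE p q : G p q = (v 0 p)^* * v 0 q by rewrite mxE big_ord1 adjmxE.
have psdG : psd G.
  split.
    by apply/matrixP => p q; rewrite adjmxE !GE conjCM conjCK mulrC.
  move=> u; rewrite /G !mulmxA -[_ *m v *m _]mulmxA mxE big_ord1.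
  have -> : (v *m adjmx u) 0 0 = ((u *m adjmx v) 0 0)^*.
    rewrite !mxE conjCsum; apply: eq_bigr => k _.
    by rewrite !adjmxE conjCM conjCK mulrC.
  exact: mul_conjC_ge0.
have blkG x y : blk G x y = delta_mx (sig x) (sig y).
  apply/matrixP => s s'; rewrite [LHS]mxE GE !vE conjC_nat -natrM mulnb mxE.
  by [].
have := psd_trace (HP 2 G psdG).
have cE x y : \sum_(s < S) ampl Psi G (tidx x s) (tidx y s) = \tr (Psi (delta_mx (sig x) (sig y))).
  by rewrite -blkG /mxtrace; apply: eq_bigr => s _; rewrite mxE !tidxK.
by rewrite /= !cE.
Qed.

End CPineq.

Section Spectral.
Variable C : numClosedFieldType.

Lemma sum_prod (I J : finType) (F : I -> C) (G : J -> C) :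
  \sum_k \sum_l F k * G l = (\sum_k F k) * (\sum_l G l).
Proof. by rewrite mulr_suml; apply: eq_bigr => k _; rewrite mulr_sumr. Qed.

Lemma wCS (I : finType) (w a b : I -> C) :
  (forall k, 0 <= w k) -> (forall k, a k \is Num.real) -> (forall k, b k \is Num.real) ->
  (\sum_k w k * a k * b k) ^+ 2 <= (\sum_k w k * a k ^+ 2) * (\sum_k w k * b k ^+ 2).
Proof.
move=> w0 ar br; rewrite -subr_ge0.
have key : \sum_k \sum_l w k * w l * (a k * b l - a l * b k) ^+ 2 =
  2 * ((\sum_k w k * a k ^+ 2) * (\sum_k w k * b k ^+ 2) - (\sum_k w k * a k * b k) ^+ 2).
  rewrite (eq_bigr (fun k => \sum_l (w k * a k ^+ 2 * (w l * b l ^+ 2) +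
      w k * b k ^+ 2 * (w l * a l ^+ 2) - w k * a k * b k * (2 * (w l * a l * b l))))); last first.
    by move=> k _; apply: eq_bigr => l _; ring.
  under eq_bigr do rewrite big_split /= big_split /= sumrN.
  rewrite big_split /= big_split /= sumrN !sum_prod -mulr_sumr.
  ring.
have : 0 <= \sum_k \sum_l w k * w l * (a k * b l - a l * b k) ^+ 2.
  apply: sumr_ge0 => k _; apply: sumr_ge0 => l _; apply: mulr_ge0; first exact: mulr_ge0.
  by apply: real_exprn_even_ge0 => //; rewrite rpredB ?rpredM.
by rewrite key pmulr_rge0 // ltr0n.
Qed.


Lemma adjmx_mul m n p (A : 'M[C]_(m, n)) (B : 'M[C]_(n, p)) :
  adjmx (A *m B) = adjmx B *m adjmx A.
Proof.
apply/matrixP => i j; rewrite !mxE conjCsum; apply: eq_bigr => k _.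
by rewrite !mxE conjCM mulrC.
Qed.

Lemma adjmxK m n (A : 'M[C]_(m, n)) : adjmx (adjmx A) = A.
Proof. by apply/matrixP => i j; rewrite !mxE conjCK. Qed.

Section OneMatrix.
Variables (N : nat) (Y : 'M[C]_N).
Let M := adjmx Y *m Y.
Let P := spectralmx M.
Let lam := spectral_diag M.
Let Q := Y *m adjmx P.

Lemma M_spec : M = adjmx P *m diag_mx lam *m P.
Proof.
have nM : M \is normalmx.
  apply/normalmxP; change (M *m adjmx M = adjmx M *m M).
  by rewrite /M adjmx_mul adjmxK.
by rewrite {1}(orthomx_spectralP nM) invmx_unitary ?spectral_unitarymx.
Qed.

Lemma PPt : P *m adjmx P = 1%:M.
Proof. exact/unitarymxP/spectral_unitarymx. Qed.

Lemma PtP : adjmx P *m P = 1%:M.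
Proof.
by rewrite -[adjmx P](invmx_unitary (spectral_unitarymx M)) mulVmx ?spectral_unit.
Qed.

Lemma diagE : diag_mx lam = adjmx Q *m Q.
Proof.
rewrite /Q adjmx_mul adjmxK !mulmxA -[P *m adjmx Y *m Y]mulmxA -/M M_spec.
by rewrite !mulmxA PPt mul1mx -mulmxA PPt mulmx1.
Qed.

Lemma lamE k : lam 0 k = \sum_p `|Q p k| ^+ 2.
Proof.
have /matrixP/(_ k k) := diagE; rewrite !mxE eqxx mulr1n => ->.
by apply: eq_bigr => p _; rewrite adjmxE normCKC.
Qed.

Lemma lam_ge0 k : 0 <= lam 0 k.
Proof. by rewrite lamE; apply: sumr_ge0 => p _; apply: exprn_ge0. Qed.

Lemma trnormE : trnorm Y = \sum_k sqrtC (lam 0 k).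
Proof. by []. Qed.

Lemma YE : Y = Q *m P.
Proof. by rewrite /Q -mulmxA PtP mulmx1. Qed.

Lemma rowP_norm k : \sum_b `|P k b| ^+ 2 = 1.
Proof.
transitivity ((P *m adjmx P) k k); last by rewrite PPt mxE eqxx.
by rewrite mxE; apply: eq_bigr => b _; rewrite adjmxE normCK.
Qed.

Lemma colP_norm b : \sum_k `|P k b| ^+ 2 = 1.
Proof.
transitivity ((adjmx P *m P) b b); last by rewrite PtP mxE eqxx.
by rewrite mxE; apply: eq_bigr => k _; rewrite adjmxE normCKC.
Qed.

End OneMatrix.


Lemma wCS1 (I : finType) (a b : I -> C) :
  (forall k, a k \is Num.real) -> (forall k, b k \is Num.real) ->
  (\sum_k a k * b k) ^+ 2 <= (\sum_k a k ^+ 2) * (\sum_k b k ^+ 2).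
Proof.
move=> ar br; have := @wCS I (fun _ => 1) a b (fun _ => ler01) ar br.
by rewrite /=; under eq_bigr do rewrite mul1r; under [X in _ <= X * _]eq_bigr do rewrite mul1r;
  under [X in _ <= _ * X]eq_bigr do rewrite mul1r.
Qed.

Lemma trnorm_blk S O (Y : 'M[C]_(S * O)) (i j : 'I_S) :
  \sum_o `|Y (tidx i o) (tidx j o)| <= trnorm Y.
Proof.
set P := spectralmx (adjmx Y *m Y); set Q := Y *m adjmx P.
rewrite trnormE.
have YE' p q : Y p q = \sum_k Q p k * P k q by rewrite {1}(YE Y) mxE.
apply: (@le_trans _ _ (\sum_o \sum_k `|Q (tidx i o) k| * `|P k (tidx j o)|)).
  apply: ler_sum => o _; rewrite YE'; apply: le_trans (ler_norm_sum _ _ _) _.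
  by under eq_bigr do rewrite normrM.
rewrite exchange_big; apply: ler_sum => k _.
set x := \sum_o _.
have x0 : 0 <= x by apply: sumr_ge0 => o _; apply: mulr_ge0.
have lam0 := lam_ge0 Y k.
rewrite -(sqrCK x0) ler_sqrtC ?nnegrE ?exprn_ge0 //.
apply: le_trans (wCS1 _ _) _ => [o|o|]; rewrite ?normr_real //.
rewrite -[spectral_diag _ 0 k]mulr1; apply: ler_pM.
- by apply: sumr_ge0 => o _; apply: exprn_ge0.
- by apply: sumr_ge0 => o _; apply: exprn_ge0.
- rewrite (lamE Y k) sum_tidx (bigD1 i) //= lerDl.
  by apply: sumr_ge0 => s _; apply: sumr_ge0 => o _; apply: exprn_ge0.
- rewrite -(rowP_norm Y k) sum_tidx (bigD1 j) //= lerDl.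
  by apply: sumr_ge0 => s _; apply: sumr_ge0 => o _; apply: exprn_ge0.
Qed.

Lemma trnorm_diag N (d : 'rV[C]_N) : trnorm (diag_mx d) <= \sum_o `|d 0 o|.
Proof.
set Y := diag_mx d; set P := spectralmx (adjmx Y *m Y).
set lam := spectral_diag (adjmx Y *m Y).
have Moo o : (adjmx Y *m Y) o o = `|d 0 o| ^+ 2.
  rewrite mxE (bigD1 o) //= big1 => [|k nk]; last by rewrite !mxE (negPf nk) mulr0n mulr0.
  by rewrite addr0 adjmxE !mxE eqxx mulr1n normCKC.
have Moo' o : (adjmx Y *m Y) o o = \sum_k `|P k o| ^+ 2 * lam 0 k.
  rewrite {1}(M_spec Y) mxE; apply: eq_bigr => k _.
  by rewrite mul_mx_diag mxE adjmxE normCKC mulrAC.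
rewrite trnormE.
rewrite (eq_bigr (fun k => \sum_o `|P k o| ^+ 2 * sqrtC (lam 0 k))); last first.
  by move=> k _; rewrite -mulr_suml (rowP_norm Y k) mul1r.
rewrite exchange_big; apply: ler_sum => o _.
set z := \sum_k _.
have z0 : 0 <= z.
  by apply: sumr_ge0 => k _; apply: mulr_ge0; rewrite ?exprn_ge0 ?sqrtC_ge0 ?lam_ge0.
rewrite -(sqrCK z0) -(sqrCK (normr_ge0 (d 0 o))) ler_sqrtC ?nnegrE ?exprn_ge0 //.
have H := @wCS _ (fun k => `|P k o| ^+ 2) (fun _ => 1) (fun k => sqrtC (lam 0 k))
  (fun k => exprn_ge0 _ (normr_ge0 _)) (fun _ => rpred1 _) (fun k => sqrtC_real (lam_ge0 Y k)).
move: H; rewrite /=; under eq_bigr do rewrite mulr1.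
under [X in _ <= X * _]eq_bigr do rewrite expr1n mulr1.
under [X in _ <= _ * X]eq_bigr do rewrite sqrtCK.
by rewrite (colP_norm Y o) mul1r -Moo' Moo.
Qed.

End Spectral.

Lemma tr_delta (C : numClosedFieldType) n (i : 'I_n) : \tr (delta_mx i i : 'M[C]_n) = 1.
Proof.
rewrite /mxtrace (bigD1 i) //= big1 => [|k nk]; first by rewrite !mxE eqxx addr0.
by rewrite mxE (negPf nk).
Qed.

Lemma msd (C : numClosedFieldType) n (B : 'M[C]_n) :
  B = \sum_i \sum_j B i j *: delta_mx i j.
Proof. exact: matrix_sum_delta. Qed.

Lemma half_le (C : numClosedFieldType) (x y : C) : x *+ 2 <= y -> x <= 2^-1 * y.
Proof.
move=> H; have -> : x = 2^-1 * (x *+ 2).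
  by field.
by apply: ler_wpM2l H; rewrite invr_ge0 ler0n.
Qed.

Theorem lemma5p1 (C : numClosedFieldType) (S O : nat) (A : finType)
  (Phi : A -> 'I_O -> {linear 'M[C]_S -> 'M[C]_S})
  (R : A -> {linear 'M[C]_O -> 'M[C]_(S * O)})
  (kappa : C)
  (E : nat -> {linear 'M[C]_S -> 'M[C]_S})
  (L l : nat) (tau : seq (A * 'I_O)) (a1 : A)
  (pi : seq (A * 'I_O) -> A -> C) :
  (forall a, is_instrument (Phi a)) ->
  (forall a (X : 'M[C]_S), R a (ptrS (instr (Phi a) X)) = instr (Phi a) X) ->
  (forall a, diag_norm_le (R a) kappa) ->
  (forall t, (0 < t < L)%N -> cptp (E t)) ->
  (l <= L - 2)%N -> (2 <= L)%N ->
  size tau = l ->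
  (forall (o : 'I_O) (rest : seq (A * 'I_O)),
      is_distribution (pi (tau ++ (a1, o) :: rest))) ->
  forall X : 'M[C]_O, is_diag X ->
    lhs_sum Phi R E L l tau a1 pi X <= (S ^ 2)%:R * kappa * trnorm X.
Proof.
move=> HI HR HRk HE lL L2 sz Hpi X Xd.
rewrite /lhs_sum.
rewrite (lhs_Ex pi (L - 1 - l) tau a1 (fun w => trnorm (applyA Phi R E l.+1 (steps a1 w) X))).
have [N' HN] : exists N', (L - 1 - l)%N = N'.+1 by exists (L - 2 - l)%N; lia.
have tN : (l.+2 + N')%N = L by lia.
rewrite HN /=.
set Y := R a1 X.
pose c o1 (i j : 'I_S) := Y (tidx i o1) (tidx j o1).
have step1 o1 a2 : Ex pi N' (tau ++ [:: (a1, o1)]) a2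
    (fun ws => trnorm (applyA Phi R E l.+1 (steps a1 ((o1, a2) :: ws)) X)) <=
    \sum_i \sum_j `|c o1 i j|.
  set h1 := tau ++ [:: (a1, o1)].
  have D1 : Dist pi h1 by move=> x rest; rewrite /h1 -catA; apply: Hpi.
  pose T ws oL Z := \tr (Phi (lastA a2 ws) oL (fin Phi E l.+2 a2 ws (E l.+1 Z))).
  pose H ws := \sum_i \sum_j `|c o1 i j| *
     (2^-1 * (\sum_oL T ws oL (delta_mx i i) + \sum_oL T ws oL (delta_mx j j))).
  apply: (@le_trans _ _ (Ex pi N' h1 a2 H)).
    apply: Ex_le => // ws szws.
    rewrite stepsS /= /Atilde (applyA_fin E HR) ptrS_instr.
    apply: le_trans (trnorm_diag _) _.
    under eq_bigr do rewrite mxE.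
    have E1 : (0 < l.+1 < L)%N by apply/andP; split => //; lia.
    apply: (@le_trans _ _ (\sum_oL \sum_i \sum_j `|c o1 i j| *
        (2^-1 * (T ws oL (delta_mx i i) + T ws oL (delta_mx j j))))); last first.
      rewrite /H exchange_big /=; apply: ler_sum => i _.
      rewrite exchange_big /=; apply: ler_sum => j _.
      by rewrite -mulr_sumr -mulr_sumr big_split.
    apply: ler_sum => oL _.
    have CPpsi : completely_positive
        (fun Z => Phi (lastA a2 ws) oL (fin Phi E l.+2 a2 ws (E l.+1 Z))).
      apply: CP_comp; first exact: (HI _).1.
      apply: CP_comp; last exact: (HE l.+1 E1).1.
      by apply: (fin_CP _ HI HE) => //; rewrite szws tN.
    rewrite [blockO o1 Y]msd.
    have -> : \tr (Phi (lastA a2 ws) oL (fin Phi E l.+2 a2 ws (E l.+1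
        (\sum_i \sum_j blockO o1 Y i j *: delta_mx i j)))) =
        \sum_i \sum_j c o1 i j * T ws oL (delta_mx i j).
      rewrite linear_sum fin_sum !linear_sum; apply: eq_bigr => i _.
      rewrite linear_sum fin_sum !linear_sum; apply: eq_bigr => j _.
      by rewrite !linearZ /= finZ !linearZ /= mxE.
    apply: le_trans (ler_norm_sum _ _ _) _; apply: ler_sum => i _.
    apply: le_trans (ler_norm_sum _ _ _) _; apply: ler_sum => j _.
    rewrite normrM; apply: ler_wpM2l => //; apply: half_le.
    by case: (CP_trace_ineq i j CPpsi).
  rewrite /H Ex_sum; apply: ler_sum => i _; rewrite Ex_sum; apply: ler_sum => j _.
  rewrite Ex_scale Ex_scale Ex_add.
  have E1 : (0 < l.+1 < L)%N by apply/andP; split => //; lia.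
  rewrite /T !(Ex_TP _ _ HI HE D1) ?tN // !(HE l.+1 E1).2 !tr_delta.
  by rewrite (_ : 2^-1 * (1 + 1) = 1 :> C) ?mulr1 //; field.
apply: (@le_trans _ _ (\sum_o1 \sum_i \sum_j `|c o1 i j|)).
  apply: ler_sum => o1 _.
  apply: (@le_trans _ _ (\sum_a2 pi (tau ++ [:: (a1, o1)]) a2 * \sum_i \sum_j `|c o1 i j|)).
    apply: ler_sum => a2 _; apply: ler_wpM2l; first exact: (Hpi o1 [::]).1.
    exact: step1.
  by rewrite -mulr_suml (Hpi o1 [::]).2 mul1r.
rewrite exchange_big; under eq_bigr do rewrite exchange_big.
apply: (@le_trans _ _ (\sum_(i < S) \sum_(j < S) trnorm Y)).
  by apply: ler_sum => i _; apply: ler_sum => j _; apply: trnorm_blk.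
rewrite sumr_const card_ord sumr_const card_ord -mulrnA -[X in X <= _]mulr_natl mulnn -mulrA.
apply: ler_wpM2l; first exact: ler0n.
exact: HRk.
Qed.
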